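(* Let $G$ be a finite group, let $n\ge1$, and let $\phi,\theta\in S_n$ be such that $\theta$ is obtained from $\phi$ by an $x$--$y$ cyclic operation for some $x,y\in\{0,1,\dots,n\}$. Then \[ Pr(a_1a_2\cdots a_n=a_{\phi_1}a_{\phi_2}\cdots a_{\phi_n})=Pr(a_1a_2\cdots a_n=a_{\theta_1}a_{\theta_2}\cdots a_{\theta_n}), \] where in both cases $a_1,\dots,a_n$ are independent and uniformly random elements of $G$.
   Context: Permutations are written in one-line notation $\phi=\langle\phi_1\dots\phi_n\rangle$, with $\phi_i=\phi(i)$; set $\phi_0=0$. The big black cycle of $\phi$ is the $(n+1)$-cycle $\phi^{\cdot}$ on $\{0,1,\dots,n\}$ defined by $\phi^{\cdot}(\phi_i)=\phi_{i-1}$ for $1\le i\le n$ and $\phi^{\cdot}(0)=\phi_n$. In cycle notation, $\phi^{\cdot}=(0,\phi_n,\phi_{n-1},\dots,\phi_1)$. We write $a\to b$ when $\phi^{\cdot}(a)=b$. Every $(n+1)$-cycle $(0,c_n,\dots,c_1)$ on $\{0,\dots,n\}$ is the big black cycle of exactly one permutation, namely $\langle c_1\dots c_n\rangle$. $x$--$y$ cyclic operation: suppose $\phi^{\cdot}$ contains $x+1\to y\to x$; when $x=n$ this condition reads $0\to y\to n$. Then $\theta$ is the permutation whose big black cycle $\theta^{\cdot}$ is obtained from $\phi^{\cdot}$ by relabeling its entries as follows. (i) If $x<n$ and $y>x+1$: the entry $x+1$ is replaced by $y-1$, each entry $t$ with $x+2\le t\le y-1$ is replaced by $t-1$, and all other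 entries are unchanged. (ii) If $y<x$: the entry $x$ is replaced by $y+1$, each entry $t$ with $y+1\le t\le x-1$ is replaced by $t+1$, and all other entries are unchanged. *)

(* Defs.v *)
From mathcomp Require Import all_boot all_order all_algebra all_fingroup.
Set Implicit Arguments. Unset Strict Implicit. Unset Printing Implicit Defensive.

Local Open Scope nat_scope.

(* A permutation phi of {1..n} is encoded as phi : 'S_n on {0..n-1}:
   the paper's phi_i (1 <= i <= n) is (phi (i-1)).+1.
   [oneline0 phi] is the list [:: phi_0; phi_1; ...; phi_n] with phi_0 = 0. *)
Definition oneline0 (n : nat) (phi : 'S_n) : seq nat :=
  0 :: [seq (phi i).+1 | i <- enum 'I_n].

Definition phiv (n : nat) (phi : 'S_n) (i : nat) : nat := nth 0 (oneline0 phi) i.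

(* The big black cycle phi^. on {0,...,n}:
   phi^.(phi_i) = phi_(i-1) for 1 <= i <= n, and phi^.(0) = phi_n. *)
Definition bbc (n : nat) (phi : 'S_n) (a : nat) : nat :=
  match index a (oneline0 phi) with
  | j.+1 => phiv phi j
  | 0 => phiv phi n
  end.

Definition relab_i (x y t : nat) : nat :=
  if t == x.+1 then y.-1
  else if (x.+2 <= t) && (t <= y.-1) then t.-1 else t.

Definition relab_ii (x y t : nat) : nat :=
  if t == x then y.+1
  else if (y.+1 <= t) && (t <= x.-1) then t.+1 else t.

(* "x+1" in the condition x+1 -> y -> x, read as 0 when x = n. *)
Definition succ_cyc (n x : nat) : nat := if x == n then 0 else x.+1.

(* theta is obtained from phi by the x--y cyclic operation: phi^. contains
   x+1 -> y -> x (0 -> y -> n when x = n), we are in case (i) or (ii), and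
   theta^. is phi^. with every entry t relabeled to r t, i.e.
   theta^.(r k) = r (phi^.(k)) for all k in {0..n}. *)
Definition cyclic_op (n : nat) (phi theta : 'S_n) (x y : nat) : Prop :=
  [/\ x <= n, y <= n,
      bbc phi (succ_cyc n x) = y, bbc phi y = x &
      ((x < n /\ x.+1 < y /\
        forall k, k <= n -> bbc theta (relab_i x y k) = relab_i x y (bbc phi k))
       \/
       (y < x /\
        forall k, k <= n -> bbc theta (relab_ii x y k) = relab_ii x y (bbc phi k)))].

Definition word_prob (gT : finGroupType) (n : nat) (phi : 'S_n) : rat :=
  ((#|[set a : {ffun 'I_n -> gT} |
        (\prod_(i < n) a i)%g == (\prod_(i < n) a (phi i))%g]|)%:R
   / (#|{ffun 'I_n -> gT}|)%:R)%R.

(* Main.v *)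
Require Import Defs.
From mathcomp Require Import all_boot all_order all_algebra all_fingroup.
From mathcomp Require Import zify.
From Stdlib Require Import FunctionalExtensionality.
Set Implicit Arguments. Unset Strict Implicit. Unset Printing Implicit Defensive.

Section Infra.
Variable gT : finGroupType.
Variable n : nat.

Definition cf (f : {ffun 'I_n -> gT}) (v : nat) : gT :=
  if v is k.+1 then (if insub k is Some i then f i else 1%g) else 1%g.

Lemma cfE f (i : 'I_n) : cf f i.+1 = f i.
Proof. by rewrite /=; case: insubP => [j _ /val_inj -> //|]; rewrite ltn_ord. Qed.

Lemma idx_enum : index_enum 'I_n = enum 'I_n.
Proof. by rewrite enumT /index_enum unlock. Qed.

Lemma cf_big (f : {ffun 'I_n -> gT}) : (\prod_(i < n) f i = \prod_(0 <= v < n.+1) cf f v)%g.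
Proof.
rewrite big_ltn // mul1g big_add1 /= big_mkord; apply eq_bigr => i _; exact: (esym (cfE f i)).
Qed.

Lemma cf_big_o (f : {ffun 'I_n -> gT}) (psi : 'S_n) (r : nat -> nat) : r 0 = 0 ->
  (\prod_(v <- oneline0 psi) cf f (r v) = \prod_(i < n) cf f (r (psi i).+1))%g.
Proof. move=> r0; by rewrite /oneline0 big_cons r0 /= mul1g big_map -idx_enum. Qed.

Lemma card_bij_pred (F : {ffun 'I_n -> gT} -> {ffun 'I_n -> gT}) (P1 P2 : pred {ffun 'I_n -> gT}) :
  injective F -> (forall f, P1 f = P2 (F f)) -> #|[set f | P1 f]| = #|[set f | P2 f]|.
Proof.
move=> injF h; rewrite -[RHS](card_preimset _ injF); apply: eq_card => f.
by rewrite !inE h.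
Qed.

Definition upd (c : nat -> gT) (w : nat) (e : gT) : nat -> gT :=
  fun v => if v == w then e else c v.

Definition Fm w1 w2 (e1 e2 : (nat -> gT) -> gT) (f : {ffun 'I_n -> gT}) : {ffun 'I_n -> gT} :=
  [ffun i : 'I_n => upd (upd (cf f) w2 (e2 (cf f))) w1 (e1 (cf f)) i.+1].

Lemma cf_Fm w1 w2 e1 e2 f : 0 < w1 <= n -> 0 < w2 <= n ->
  cf (Fm w1 w2 e1 e2 f) = upd (upd (cf f) w2 (e2 (cf f))) w1 (e1 (cf f)).
Proof.
move=> /andP[w1p w1n] /andP[w2p w2n]; apply: functional_extensionality => v.
case: v => [|k].
  have h1 : (0 == w1) = false by apply/eqP; lia.
  have h2 : (0 == w2) = false by apply/eqP; lia.
  by rewrite /upd h1 h2.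
rewrite /=; case: insubP => [i _ ki|kn].
  by rewrite ffunE ki.
have h1 : (k.+1 == w1) = false by apply/eqP; lia.
have h2 : (k.+1 == w2) = false by apply/eqP; lia.
rewrite /upd h1 h2 /=; case: insubP => [i ki _|//]; by rewrite ki in kn.
Qed.

Lemma case_count (L1 L2 R : (nat -> gT) -> gT) w1 w2 e1 e2 :
  0 < w1 <= n -> 0 < w2 <= n ->
  (forall c, c 0 = 1%g -> (L2 (upd (upd c w2 (e2 c)) w1 (e1 c)) == R (upd (upd c w2 (e2 c)) w1 (e1 c)))
       = (L1 c == R c)) ->
  (forall c1 c2, (forall v, upd (upd c1 w2 (e2 c1)) w1 (e1 c1) v = upd (upd c2 w2 (e2 c2)) w1 (e1 c2) v) ->
       forall v, c1 v = c2 v) ->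
  #|[set f | L1 (cf f) == R (cf f)]| = #|[set f | L2 (cf f) == R (cf f)]|.
Proof.
move=> hw1 hw2 heq hinj.
apply: (@card_bij_pred (Fm w1 w2 e1 e2)).
  move=> f1 f2 E; apply/ffunP => i.
  have := congr1 cf E; rewrite !cf_Fm // => E2.
  by rewrite -!cfE (hinj (cf f1) (cf f2) (fun v => congr1 (fun g => g v) E2)).
by move=> f; rewrite cf_Fm // heq.
Qed.

End Infra.


Section Oneline.
Variable n : nat.
Implicit Types (psi : 'S_n).

Lemma size_o psi : size (oneline0 psi) = n.+1.
Proof. by rewrite /oneline0 /= size_map size_enum_ord. Qed.

Lemma nth_o0 psi : nth 0 (oneline0 psi) 0 = 0.
Proof. by []. Qed.

Lemma nth_oS psi (i : 'I_n) : nth 0 (oneline0 psi) i.+1 = (psi i).+1.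
Proof.
rewrite /oneline0 /= (nth_map i); last by rewrite size_enum_ord.
by rewrite nth_ord_enum.
Qed.

Lemma nth_oS' psi m : 0 < m <= n -> 0 < nth 0 (oneline0 psi) m.
Proof.
case: m => [//|m] /andP[_ mn].
by have := nth_oS psi (Ordinal mn) => /= ->.
Qed.

Lemma uniq_o psi : uniq (oneline0 psi).
Proof.
rewrite /oneline0 cons_uniq; apply/andP; split.
  by apply/mapP => -[i _].
rewrite map_inj_uniq ?enum_uniq // => i j /= /succn_inj /val_inj; exact: perm_inj.
Qed.

Lemma o_le psi v : v \in oneline0 psi -> v <= n.
Proof. rewrite inE => /orP[/eqP -> //|/mapP[i _ ->]]; exact: ltn_ord. Qed.

Lemma mem_o psi v : v <= n -> v \in oneline0 psi.
Proof.
case: v => [|k] hk; first by rewrite mem_head.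
rewrite inE; apply/orP; right; apply/mapP.
exists (psi^-1 (Ordinal hk))%g; first by rewrite mem_enum.
by rewrite permKV.
Qed.

Lemma bbc_nth psi m : 0 < m <= n -> bbc psi (nth 0 (oneline0 psi) m) = nth 0 (oneline0 psi) m.-1.
Proof.
move=> /andP[m0 mn].
rewrite /bbc index_uniq ?uniq_o ?size_o //.
by case: m m0 mn.
Qed.

Lemma bbc0 psi : bbc psi 0 = nth 0 (oneline0 psi) n.
Proof. by rewrite /bbc /oneline0 /=. Qed.

Lemma theta_rel (phi theta : 'S_n) (r : nat -> nat) : r 0 = 0 ->
  (forall k, k <= n -> bbc theta (r k) = r (bbc phi k)) ->
  forall i : 'I_n, (theta i).+1 = r (phi i).+1.
Proof.
move=> r0 h.
have key : forall m, m <= n -> nth 0 (oneline0 theta) (n - m) = r (nth 0 (oneline0 phi) (n - m)).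
  elim=> [|m IH] hm.
    by have := h 0 (leq0n n); rewrite r0 !bbc0 subn0.
  have e : n - m.+1 = (n - m).-1 by lia.
  have k1 : 0 < n - m <= n by lia.
  rewrite e -bbc_nth // IH; last by lia.
  rewrite h; first by rewrite bbc_nth.
  apply: (@o_le phi); apply: mem_nth; rewrite size_o; lia.
move=> i.
have := key (n - i.+1); rewrite (_ : n - (n - i.+1) = i.+1); last by have := ltn_ord i; lia.
rewrite !nth_oS => -> //; lia.
Qed.

End Oneline.


Ltac rcase := rewrite /relab_i /relab_ii; repeat first [case: eqP => ? /= | case: andP => ? /=]; lia.

Section Relab.
Variables x y : nat.
Lemma ri_lo v : x.+1 < y -> v <= x -> relab_i x y v = v. Proof. move=> *; rcase. Qed.
Lemma ri_x1 : x.+1 < y -> relab_i x y x.+1 = y.-1. Proof. move=> *; rcase. Qed.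
Lemma ri_mid v : x.+1 < y -> x.+2 <= v <= y.-1 -> relab_i x y v = v.-1. Proof. move=> *; rcase. Qed.
Lemma ri_hi v : x.+1 < y -> y <= v -> relab_i x y v = v. Proof. move=> *; rcase. Qed.
Lemma ri_inj : x.+1 < y -> injective (relab_i x y).
Proof. move=> h a b; rcase. Qed.
Lemma rii_lo v : y < x -> v <= y -> relab_ii x y v = v. Proof. move=> *; rcase. Qed.
Lemma rii_mid v : y < x -> y.+1 <= v <= x.-1 -> relab_ii x y v = v.+1. Proof. move=> *; rcase. Qed.
Lemma rii_x : y < x -> relab_ii x y x = y.+1. Proof. move=> *; rcase. Qed.
Lemma rii_hi v : y < x -> x < v -> relab_ii x y v = v. Proof. move=> *; rcase. Qed.
Lemma rii_inj : y < x -> injective (relab_ii x y).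
Proof. move=> h a b; rcase. Qed.
End Relab.


Lemma seq_at (s : seq nat) i : i < size s -> s = take i s ++ nth 0 s i :: drop i.+1 s.
Proof. move=> h; by rewrite -{1}(cat_take_drop i s) (drop_nth 0 h). Qed.

Lemma take2 (s : seq nat) : 1 < size s -> take 2 s = [:: nth 0 s 0; nth 0 s 1].
Proof. by case: s => [|a [|b s]] //=; rewrite take0. Qed.

Section Struct.
Variable n : nat.

Lemma struct (phi : 'S_n) x y : 0 < n -> x <= n -> y <= n ->
  bbc phi (succ_cyc n x) = y -> bbc phi y = x ->
  [\/ x < n /\ exists C D, oneline0 phi = C ++ [:: x; y; x.+1] ++ D,
      x = n /\ 0 < y /\ exists C, oneline0 phi = C ++ [:: n; y] |
      y = 0 /\ x < n /\ exists D, oneline0 phi = [:: 0; x.+1] ++ D ++ [:: x]].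
Proof.
move=> n0 hx hy h1 h2.
set o := oneline0 phi.
have uo : uniq o := uniq_o phi.
have so : size o = n.+1 := size_o phi.
have ny : nth 0 o (index y o) = y := nth_index 0 (mem_o phi hy).
have iy : index y o <= n by rewrite -ltnS -so index_mem mem_o.
have hsx : succ_cyc n x <= n by rewrite /succ_cyc; case: eqP => // /eqP; lia.
have nsx : nth 0 o (index (succ_cyc n x) o) = succ_cyc n x := nth_index 0 (mem_o phi hsx).
have isx : index (succ_cyc n x) o <= n by rewrite -ltnS -so index_mem mem_o.
have ninj : forall i j, i <= n -> j <= n -> nth 0 o i = nth 0 o j -> i = j.
  by move=> i j hi hj /eqP; rewrite nth_uniq ?so // => /eqP.
have npos : forall m, 0 < m <= n -> 0 < nth 0 o m by move=> m; exact: nth_oS'.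
have sc0 : succ_cyc n x = 0 -> x = n by rewrite /succ_cyc; case: eqP.
have scS : x != n -> succ_cyc n x = x.+1 by rewrite /succ_cyc => /negbTE ->.
move: h1 h2; rewrite /bbc /phiv -/o.
case Hi: (index y o) ny iy => [|i'] ny iy h1 h2.
-
  have y0 : y = 0 by rewrite -ny.
  case Hj: (index (succ_cyc n x) o) nsx isx h1 => [|j'] nsx isx h1.
    have := npos n; rewrite h1 y0; lia.
  have j0 : j' = 0 by apply: ninj; rewrite ?h1 ?y0 //; lia.
  rewrite j0 in nsx.
  have xn : x != n.
    apply/eqP => xn; have := npos 1; rewrite nsx; move: xn; rewrite /succ_cyc => ->; rewrite eqxx; lia.
  rewrite scS // in nsx.
  have n2 : 1 < n.
    case: (ltnP 1 n) => // n1.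
    have : nth 0 o n = nth 0 o 1 by congr nth; lia.
    rewrite h2 nsx; lia.
  constructor 3; split => //; split; first lia.
  exists (take (n - 2) (drop 2 o)).
  rewrite {1}(@seq_at o n) ?so // drop_oversize ?so //.
  have e : take n o = [:: 0; x.+1] ++ take (n - 2) (drop 2 o).
    by rewrite -{1}(subnKC (n2 : 2 <= n)) takeD take2 ?so // nsx.
  by rewrite e h2 -catA.
- case: (ltnP i'.+1 n) => hin.
  + case Hj: (index (succ_cyc n x) o) nsx isx h1 => [|j'] nsx isx h1.
      have := ninj n i'.+1 (leqnn n) iy; rewrite h1 ny => /(_ erefl); lia.
    have ej : j' = i'.+1 by apply: ninj; rewrite ?h1 ?ny //; lia.
    rewrite ej in nsx.
    have xn : x != n.
      apply/eqP => xn; have := npos i'.+2; rewrite nsx; move: xn; rewrite /succ_cyc => ->; rewrite eqxx; lia.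
    rewrite scS // in nsx.
    constructor 1; split; first by move: xn hx; lia.
    exists (take i' o), (drop i'.+3 o).
    rewrite {1}(@seq_at o i') ?so; last lia.
    rewrite (drop_nth 0) ?so; last lia.
    rewrite (drop_nth 0) ?so; last lia.
    by rewrite h2 ny nsx.
  + have ein : i'.+1 = n by lia.
    case Hj: (index (succ_cyc n x) o) nsx isx h1 => [|j'] nsx isx h1.
      have xn : x = n by apply: sc0; rewrite -nsx.
      constructor 2; split => //; split.
        by rewrite -ny; apply: npos; lia.
      exists (take i' o).
      rewrite {1}(@seq_at o i') ?so; last lia.
      rewrite (drop_nth 0) ?so; last lia.
      rewrite drop_oversize ?so; last lia.
      by rewrite h2 ny xn.
    have := ninj j' i'.+1; rewrite h1 ny => /(_ _ _ erefl); lia.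
Qed.

End Struct.


Section Dec.
Variable gT : finGroupType.
Variable n : nat.
Local Open Scope group_scope.

Lemma decI (G : nat -> gT) x y : x.+1 < y -> y <= n ->
  \prod_(0 <= v < n.+1) G v = \prod_(0 <= v < x) G v * G x * \prod_(x.+1 <= v < y.-1) G v
     * G y.-1 * G y * \prod_(y.+1 <= v < n.+1) G v.
Proof.
move=> xy yn.
rewrite (@big_cat_nat _ _ _ x) /=; [|lia|lia].
rewrite (big_ltn (m:=x)); [|lia].
rewrite (@big_cat_nat _ _ _ y.-1 x.+1); [|lia|lia].
rewrite (big_ltn (m:=y.-1)); [|lia].
rewrite (_ : y.-1.+1 = y); [|lia].
rewrite (big_ltn (m:=y)); [|lia].
by rewrite !mulgA.
Qed.

Lemma decI_r (G : nat -> gT) x y : x.+1 < y -> y <= n ->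
  \prod_(0 <= v < n.+1) G (relab_i x y v) = \prod_(0 <= v < x) G v * G x * G y.-1 *
     \prod_(x.+1 <= v < y.-1) G v * G y * \prod_(y.+1 <= v < n.+1) G v.
Proof.
move=> xy yn.
rewrite (@big_cat_nat _ _ _ x) /=; [|lia|lia].
rewrite (big_ltn (m:=x)); [|lia].
rewrite (big_ltn (m:=x.+1)); [|lia].
rewrite (@big_cat_nat _ _ _ y x.+2); [|lia|lia].
rewrite (big_ltn (m:=y)); [|lia].
rewrite !mulgA; congr (_ * _ * _ * _ * _ * _).
- by apply: eq_big_nat => v hv; rewrite ri_lo //; lia.
- by rewrite ri_lo.
- by rewrite ri_x1.
- rewrite big_add1; apply: eq_big_nat => v hv; rewrite ri_mid //; lia.
- by rewrite ri_hi.
- by apply: eq_big_nat => v hv; rewrite ri_hi //; lia.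
Qed.

Lemma decII (G : nat -> gT) x y : y < x -> x <= n ->
  \prod_(0 <= v < n.+1) G v = \prod_(0 <= v < y) G v * G y * G y.+1 *
     \prod_(y.+2 <= v < x.+1) G v * \prod_(x.+1 <= v < n.+1) G v.
Proof.
move=> xy xn.
rewrite (@big_cat_nat _ _ _ y) /=; [|lia|lia].
rewrite (big_ltn (m:=y)); [|lia].
rewrite (big_ltn (m:=y.+1)); [|lia].
rewrite (@big_cat_nat _ _ _ x.+1 y.+2); [|lia|lia].
by rewrite !mulgA.
Qed.

Lemma decII_r (G : nat -> gT) x y : y < x -> x <= n ->
  \prod_(0 <= v < n.+1) G (relab_ii x y v) = \prod_(0 <= v < y) G v * G y *
     \prod_(y.+2 <= v < x.+1) G v * G y.+1 * \prod_(x.+1 <= v < n.+1) G v.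
Proof.
move=> xy xn.
rewrite (@big_cat_nat _ _ _ y) /=; [|lia|lia].
rewrite (big_ltn (m:=y)); [|lia].
rewrite (@big_cat_nat _ _ _ x y.+1); [|lia|lia].
rewrite (big_ltn (m:=x)); [|lia].
rewrite !mulgA; congr (_ * _ * _ * _ * _).
- by apply: eq_big_nat => v hv; rewrite rii_lo //; lia.
- by rewrite rii_lo.
- rewrite [RHS]big_add1 /=; apply: eq_big_nat => v hv; rewrite rii_mid //; lia.
- by rewrite rii_x.
- by apply: eq_big_nat => v hv; rewrite rii_hi //; lia.
Qed.

End Dec.


Lemma uniq_mid (C D m : seq nat) v a : uniq (C ++ m ++ D) -> a \in m -> v \in C ++ D -> v != a.
Proof.
move=> u am vCD; apply/eqP => e; subst v.
have p : perm_eq (C ++ m ++ D) (m ++ C ++ D) by rewrite perm_catCA.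
have : uniq (m ++ C ++ D) by rewrite -(perm_uniq p).
by rewrite cat_uniq => /and3P[_ /hasPn h _]; have := h a vCD; rewrite am.
Qed.

Section Cases.
Variable gT : finGroupType.
Variable n : nat.
Local Open Scope group_scope.

Lemma eq_mull (a X Y : gT) : (a * X == a * Y) = (X == Y).
Proof. by apply/eqP/eqP => [/mulgI|->]. Qed.
Lemma eq_mulr (a X Y : gT) : (X * a == Y * a) = (X == Y).
Proof. by apply/eqP/eqP => [/mulIg|->]. Qed.

Lemma upd_ne (c : nat -> gT) w1 w2 e1 e2 v : v != w1 -> v != w2 -> upd (upd c w2 e2) w1 e1 v = c v.
Proof. by rewrite /upd => /negbTE -> /negbTE ->. Qed.
Lemma upd_1 (c : nat -> gT) w1 w2 e1 e2 : upd (upd c w2 e2) w1 e1 w1 = e1.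
Proof. by rewrite /upd eqxx. Qed.
Lemma upd_2 (c : nat -> gT) w1 w2 e1 e2 : w2 != w1 -> upd (upd c w2 e2) w1 e1 w2 = e2.
Proof. by rewrite /upd => /negbTE ->; rewrite eqxx. Qed.

Lemma caseI1 x y (C D : seq nat) : 0 < x -> x.+1 < y -> y <= n ->
  uniq (C ++ [:: x; y; x.+1] ++ D) ->
  #|[set f : {ffun 'I_n -> gT} | \prod_(0 <= v < n.+1) cf f (relab_i x y v) ==
       \prod_(v <- C ++ [:: x; y; x.+1] ++ D) cf f (relab_i x y v)]| =
  #|[set f : {ffun 'I_n -> gT} | \prod_(0 <= v < n.+1) cf f v ==
       \prod_(v <- C ++ [:: x; y; x.+1] ++ D) cf f (relab_i x y v)]|.
Proof.
move=> x0 xy yn uo.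
set r := relab_i x y.
apply: (@case_count _ _ (fun c => \prod_(0 <= v < n.+1) c (r v))
   (fun c => \prod_(0 <= v < n.+1) c v) (fun c => \prod_(v <- C ++ [:: x; y; x.+1] ++ D) c (r v))
   x y (fun c => c x * c y.-1) (fun c => (c y.-1)^-1 * c y)); [lia|lia| |].
- move=> c c0.
  have yx : y != x by apply/eqP; lia.
  have Eo : forall v, v != x -> v != y ->
     upd (upd c y ((c y.-1)^-1 * c y)) x (c x * c y.-1) v = c v.
    by move=> v; exact: upd_ne.
  congr (_ == _).
  + rewrite (decI _ xy yn) (decI_r _ xy yn) upd_1 upd_2 // Eo; [|apply/eqP; lia|apply/eqP; lia].
    rewrite (@eq_big_nat _ _ _ 0 x _ c); last by move=> v hv; rewrite Eo //; apply/eqP; lia.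
    rewrite (@eq_big_nat _ _ _ x.+1 y.-1 _ c); last by move=> v hv; rewrite Eo //; apply/eqP; lia.
    rewrite (@eq_big_nat _ _ _ y.+1 n.+1 _ c); last by move=> v hv; rewrite Eo //; apply/eqP; lia.
    by rewrite !mulgA mulgK.
  + rewrite !big_cat !big_cons !big_nil /=.
    have rx : r x = x by rewrite /r ri_lo.
    have ry : r y = y by rewrite /r ri_hi.
    have rx1 : r x.+1 = y.-1 by rewrite /r ri_x1.
    have EC : forall s, {subset s <= C ++ D} ->
        \prod_(v <- s) upd (upd c y ((c y.-1)^-1 * c y)) x (c x * c y.-1) (r v) = \prod_(v <- s) c (r v).
      move=> s sub; apply: eq_big_seq => v /sub vs; rewrite Eo //.
        by rewrite -rx (inj_eq (ri_inj xy)); apply: (uniq_mid uo) => //; rewrite !inE eqxx ?orbT ?orTb.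
      by rewrite -ry (inj_eq (ri_inj xy)); apply: (uniq_mid uo) => //; rewrite !inE eqxx ?orbT ?orTb.
    have sC : {subset C <= C ++ D} by move=> v vC; rewrite mem_cat vC.
    have sD : {subset D <= C ++ D} by move=> v vD; rewrite mem_cat vD orbT.
    rewrite (EC C sC) (EC D sD).
    rewrite rx ry rx1 upd_1 upd_2 // Eo; [|apply/eqP; lia|apply/eqP; lia].
    by rewrite !mulgA mulgK.
- move=> c1 c2 E.
  have yx : y != x by apply/eqP; lia.
  have e1 : c1 y.-1 = c2 y.-1.
    by have := E y.-1; rewrite !upd_ne //; apply/eqP; lia.
  move=> v; case: (eqVneq v x) => [->|vx].
    by have := E x; rewrite !upd_1 e1 => /mulIg.
  case: (eqVneq v y) => [->|vy].
    by have := E y; rewrite !upd_2 // e1 => /mulgI.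
  by have := E v; rewrite !upd_ne.
Qed.


Lemma caseI0 y (D : seq nat) : 1 < y -> y <= n ->
  uniq ([:: 0; y; 1%N] ++ D) ->
  #|[set f : {ffun 'I_n -> gT} | \prod_(0 <= v < n.+1) cf f (relab_i 0 y v) ==
       \prod_(v <- [:: 0; y; 1%N] ++ D) cf f (relab_i 0 y v)]| =
  #|[set f : {ffun 'I_n -> gT} | \prod_(0 <= v < n.+1) cf f v ==
       \prod_(v <- [:: 0; y; 1%N] ++ D) cf f (relab_i 0 y v)]|.
Proof.
move=> xy yn uo.
set r := relab_i 0 y.
apply: (@case_count _ _ (fun c => \prod_(0 <= v < n.+1) c (r v))
   (fun c => \prod_(0 <= v < n.+1) c v) (fun c => \prod_(v <- [:: 0; y; 1%N] ++ D) c (r v))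
   y y (fun c => (c y.-1)^-1 * c y) (fun c => (c y.-1)^-1 * c y)); [lia|lia| |].
- move=> c c0.
  have Eo : forall v, v != y ->
     upd (upd c y ((c y.-1)^-1 * c y)) y ((c y.-1)^-1 * c y) v = c v.
    by move=> v vy; exact: upd_ne.
  set c' := upd _ _ _.
  have hL : \prod_(0 <= v < n.+1) c (r v) = c y.-1 * \prod_(0 <= v < n.+1) c' v.
    rewrite (decI _ xy yn) (decI_r _ xy yn) /c' upd_1 !Eo; [|apply/eqP; lia|apply/eqP; lia].
    rewrite !(big_geq (leqnn 0)) c0.
    rewrite (@eq_big_nat _ _ _ 1%N y.-1 c' c); last by move=> v hv; rewrite /c' Eo //; apply/eqP; lia.
    rewrite (@eq_big_nat _ _ _ y.+1 n.+1 c' c); last by move=> v hv; rewrite /c' Eo //; apply/eqP; lia.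
    by rewrite !mul1g !mulgA mulgK.
  have hR : \prod_(v <- [:: 0; y; 1%N] ++ D) c (r v) = c y.-1 * \prod_(v <- [:: 0; y; 1%N] ++ D) c' (r v).
    rewrite !big_cat !big_cons !big_nil /=.
    have r0 : r 0 = 0 by rewrite /r ri_lo.
    have ry : r y = y by rewrite /r ri_hi.
    have rx1 : r 1%N = y.-1 by rewrite /r ri_x1.
    have ED : \prod_(v <- D) c' (r v) = \prod_(v <- D) c (r v).
      apply: eq_big_seq => v vD; rewrite /c' Eo //.
      rewrite -ry (inj_eq (ri_inj xy)); apply: (uniq_mid (C := [::]) uo) => //; rewrite !inE eqxx ?orbT ?orTb //.
    rewrite ED r0 ry rx1 /c' upd_1 !Eo; [|apply/eqP; lia|apply/eqP; lia].
    by rewrite c0 !mul1g !mulgA mulgV mul1g.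
  by rewrite hL hR eq_mull.
- move=> c1 c2 E.
  have e1 : c1 y.-1 = c2 y.-1.
    by have := E y.-1; rewrite !upd_ne //; apply/eqP; lia.
  move=> v; case: (eqVneq v y) => [->|vy].
    by have := E y; rewrite !upd_1 e1 => /mulgI.
  by have := E v; rewrite !upd_ne.
Qed.

Lemma caseII1 x y (C D : seq nat) : 0 < y -> y < x -> x < n ->
  uniq (C ++ [:: x; y; x.+1] ++ D) ->
  #|[set f : {ffun 'I_n -> gT} | \prod_(0 <= v < n.+1) cf f (relab_ii x y v) ==
       \prod_(v <- C ++ [:: x; y; x.+1] ++ D) cf f (relab_ii x y v)]| =
  #|[set f : {ffun 'I_n -> gT} | \prod_(0 <= v < n.+1) cf f v ==
       \prod_(v <- C ++ [:: x; y; x.+1] ++ D) cf f (relab_ii x y v)]|.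
Proof.
move=> y0 xy xn uo.
have xn' : x <= n by lia.
set r := relab_ii x y.
apply: (@case_count _ _ (fun c => \prod_(0 <= v < n.+1) c (r v))
   (fun c => \prod_(0 <= v < n.+1) c v) (fun c => \prod_(v <- C ++ [:: x; y; x.+1] ++ D) c (r v))
   x.+1 y (fun c => c y.+1 * c x.+1) (fun c => c y * (c y.+1)^-1)); [lia|lia| |].
- move=> c c0.
  have yx : y != x.+1 by apply/eqP; lia.
  have Eo : forall v, v != x.+1 -> v != y ->
     upd (upd c y (c y * (c y.+1)^-1)) x.+1 (c y.+1 * c x.+1) v = c v.
    by move=> v; exact: upd_ne.
  congr (_ == _).
  + rewrite (decII _ xy xn') (decII_r _ xy xn').
    rewrite (big_ltn (m:=x.+1)); [|lia].
    rewrite (big_ltn (m:=x.+1)); [|lia].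
    rewrite upd_1 upd_2 // Eo; [|apply/eqP; lia|apply/eqP; lia].
    rewrite (@eq_big_nat _ _ _ 0 y _ c); last by move=> v hv; rewrite Eo //; apply/eqP; lia.
    rewrite (@eq_big_nat _ _ _ y.+2 x.+1 _ c); last by move=> v hv; rewrite Eo //; apply/eqP; lia.
    rewrite (@eq_big_nat _ _ _ x.+2 n.+1 _ c); last by move=> v hv; rewrite Eo //; apply/eqP; lia.
    by rewrite !mulgA mulgKV.
  + rewrite !big_cat !big_cons !big_nil /=.
    have rx : r x = y.+1 by rewrite /r rii_x.
    have ry : r y = y by rewrite /r rii_lo.
    have rx1 : r x.+1 = x.+1 by rewrite /r rii_hi.
    have EC : forall s, {subset s <= C ++ D} ->
        \prod_(v <- s) upd (upd c y (c y * (c y.+1)^-1)) x.+1 (c y.+1 * c x.+1) (r v) = \prod_(v <- s) c (r v).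
      move=> s sub; apply: eq_big_seq => v /sub vs; rewrite Eo //.
        by rewrite -rx1 (inj_eq (rii_inj xy)); apply: (uniq_mid uo) => //; rewrite !inE eqxx ?orbT ?orTb.
      by rewrite -ry (inj_eq (rii_inj xy)); apply: (uniq_mid uo) => //; rewrite !inE eqxx ?orbT ?orTb.
    have sC : {subset C <= C ++ D} by move=> v vC; rewrite mem_cat vC.
    have sD : {subset D <= C ++ D} by move=> v vD; rewrite mem_cat vD orbT.
    rewrite (EC C sC) (EC D sD).
    rewrite rx ry rx1 upd_1 upd_2 // Eo; [|apply/eqP; lia|apply/eqP; lia].
    by rewrite !mulgA mulgKV.
- move=> c1 c2 E.
  have yx : y != x.+1 by apply/eqP; lia.
  have e1 : c1 y.+1 = c2 y.+1.
    by have := E y.+1; rewrite !upd_ne //; apply/eqP; lia.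
  move=> v; case: (eqVneq v x.+1) => [->|vx].
    by have := E x.+1; rewrite !upd_1 e1 => /mulgI.
  case: (eqVneq v y) => [->|vy].
    by have := E y; rewrite !upd_2 // e1 => /mulIg.
  by have := E v; rewrite !upd_ne.
Qed.

Lemma caseIIn y (C : seq nat) : 0 < y -> y < n ->
  uniq (C ++ [:: n; y]) ->
  #|[set f : {ffun 'I_n -> gT} | \prod_(0 <= v < n.+1) cf f (relab_ii n y v) ==
       \prod_(v <- C ++ [:: n; y]) cf f (relab_ii n y v)]| =
  #|[set f : {ffun 'I_n -> gT} | \prod_(0 <= v < n.+1) cf f v ==
       \prod_(v <- C ++ [:: n; y]) cf f (relab_ii n y v)]|.
Proof.
move=> y0 xy uo.
have xn' : n <= n by [].
set r := relab_ii n y.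
apply: (@case_count _ _ (fun c => \prod_(0 <= v < n.+1) c (r v))
   (fun c => \prod_(0 <= v < n.+1) c v) (fun c => \prod_(v <- C ++ [:: n; y]) c (r v))
   y y (fun c => c y * (c y.+1)^-1) (fun c => c y * (c y.+1)^-1)); [lia|lia| |].
- move=> c c0.
  have Eo : forall v, v != y ->
     upd (upd c y (c y * (c y.+1)^-1)) y (c y * (c y.+1)^-1) v = c v.
    by move=> v vy; exact: upd_ne.
  set c' := upd _ _ _.
  have hL : \prod_(0 <= v < n.+1) c (r v) = (\prod_(0 <= v < n.+1) c' v) * c y.+1.
    rewrite (decII _ xy xn') (decII_r _ xy xn') /c' upd_1 !Eo; [|apply/eqP; lia].
    rewrite !(big_geq (leqnn n.+1)).
    rewrite (@eq_big_nat _ _ _ 0 y c' c); last by move=> v hv; rewrite /c' Eo //; apply/eqP; lia.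
    rewrite (@eq_big_nat _ _ _ y.+2 n.+1 c' c); last by move=> v hv; rewrite /c' Eo //; apply/eqP; lia.
    by rewrite !mulg1 !mulgA mulgKV.
  have hR : \prod_(v <- C ++ [:: n; y]) c (r v) = (\prod_(v <- C ++ [:: n; y]) c' (r v)) * c y.+1.
    rewrite !big_cat !big_cons !big_nil /=.
    have rx : r n = y.+1 by rewrite /r rii_x.
    have ry : r y = y by rewrite /r rii_lo.
    have ED : \prod_(v <- C) c' (r v) = \prod_(v <- C) c (r v).
      apply: eq_big_seq => v vC; rewrite /c' Eo //.
      rewrite -ry (inj_eq (rii_inj xy)); apply: (uniq_mid (C := C) (D := [::]) (m := [:: n; y])).
      + by rewrite cats0.
      + by rewrite !inE eqxx ?orbT ?orTb.
      + by rewrite cats0.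
    rewrite ED rx ry /c' upd_1 !Eo; [|apply/eqP; lia].
    by rewrite !mulg1 !mulgA mulgKV.
  by rewrite hL hR eq_mulr.
- move=> c1 c2 E.
  have e1 : c1 y.+1 = c2 y.+1.
    by have := E y.+1; rewrite !upd_ne //; apply/eqP; lia.
  move=> v; case: (eqVneq v y) => [->|vy].
    by have := E y; rewrite !upd_1 e1 => /mulIg.
  by have := E v; rewrite !upd_ne.
Qed.

Lemma caseII0 x (D : seq nat) : 0 < x -> x < n ->
  uniq ([:: 0; x.+1] ++ D ++ [:: x]) ->
  #|[set f : {ffun 'I_n -> gT} | \prod_(0 <= v < n.+1) cf f (relab_ii x 0 v) ==
       \prod_(v <- [:: 0; x.+1] ++ D ++ [:: x]) cf f (relab_ii x 0 v)]| =
  #|[set f : {ffun 'I_n -> gT} | \prod_(0 <= v < n.+1) cf f v ==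
       \prod_(v <- [:: 0; x.+1] ++ D ++ [:: x]) cf f (relab_ii x 0 v)]|.
Proof.
move=> xy xn uo.
have xn' : x <= n by lia.
set r := relab_ii x 0.
apply: (@case_count _ _ (fun c => \prod_(0 <= v < n.+1) c (r v))
   (fun c => \prod_(0 <= v < n.+1) c v) (fun c => \prod_(v <- [:: 0; x.+1] ++ D ++ [:: x]) c (r v))
   x.+1 x.+1 (fun c => c 1%N * c x.+1) (fun c => c 1%N * c x.+1)); [lia|lia| |].
- move=> c c0.
  have Eo : forall v, v != x.+1 ->
     upd (upd c x.+1 (c 1%N * c x.+1)) x.+1 (c 1%N * c x.+1) v = c v.
    by move=> v vy; exact: upd_ne.
  set c' := upd _ _ _.
  have hL : \prod_(0 <= v < n.+1) c' v = c 1%N * \prod_(0 <= v < n.+1) c (r v).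
    rewrite (decII _ xy xn') (decII_r _ xy xn').
    rewrite (big_ltn (m:=x.+1)); [|lia].
    rewrite (big_ltn (m:=x.+1)); [|lia].
    rewrite /c' upd_1 !Eo; [|apply/eqP; lia|apply/eqP; lia].
    rewrite !(big_geq (leqnn 0)) c0.
    rewrite (@eq_big_nat _ _ _ 2 x.+1 c' c); last by move=> v hv; rewrite /c' Eo //; apply/eqP; lia.
    rewrite (@eq_big_nat _ _ _ x.+2 n.+1 c' c); last by move=> v hv; rewrite /c' Eo //; apply/eqP; lia.
    by rewrite !mul1g !mulgA.
  have hR : \prod_(v <- [:: 0; x.+1] ++ D ++ [:: x]) c' (r v) =
            c 1%N * \prod_(v <- [:: 0; x.+1] ++ D ++ [:: x]) c (r v).
    rewrite !big_cat !big_cons !big_nil /=.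
    have r0 : r 0 = 0 by rewrite /r rii_lo.
    have rx : r x = 1%N by rewrite /r rii_x.
    have rx1 : r x.+1 = x.+1 by rewrite /r rii_hi.
    have ED : \prod_(v <- D) c' (r v) = \prod_(v <- D) c (r v).
      apply: eq_big_seq => v vD; rewrite /c' Eo //.
      rewrite -rx1 (inj_eq (rii_inj xy)).
      apply: (uniq_mid (C := [:: 0]) (m := [:: x.+1]) (D := D ++ [:: x])) => //.
        by rewrite mem_head.
      by rewrite inE mem_cat vD orbT.
    rewrite ED r0 rx rx1 /c' upd_1 !Eo; [|apply/eqP; lia|apply/eqP; lia].
    by rewrite c0 !mul1g !mulg1 !mulgA.
  by rewrite hL hR eq_mull.
- move=> c1 c2 E.
  have e1 : c1 1%N = c2 1%N.
    by have := E 1%N; rewrite !upd_ne //; apply/eqP; lia.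
  move=> v; case: (eqVneq v x.+1) => [->|vy].
    by have := E x.+1; rewrite !upd_1 e1 => /mulgI.
  by have := E v; rewrite !upd_ne.
Qed.

End Cases.


Lemma head0 (s C E : seq nat) : s = C ++ 0 :: E -> uniq s -> nth 0 s 0 = 0 -> C = [::].
Proof.
case: C => // a C' -> /= /andP[ha _] h0.
by rewrite h0 mem_cat mem_head orbT in ha.
Qed.

Section Reduce.
Variable gT : finGroupType.
Variable n : nat.
Local Open Scope group_scope.

Lemma big_shift (G : nat -> gT) : \prod_(0 <= v < n.+1) G v = G 0%N * \prod_(i < n) G i.+1.
Proof. by rewrite big_ltn // big_add1 /= big_mkord. Qed.

Lemma reduce (phi theta : 'S_n) (r : nat -> nat) : r 0%N = 0%N ->
  (forall i, (theta i).+1 = r (phi i).+1) ->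
  #|[set a : {ffun 'I_n -> gT} | (\prod_(i < n) a i) == (\prod_(i < n) a (phi i))]| =
  #|[set f : {ffun 'I_n -> gT} | \prod_(0 <= v < n.+1) cf f (r v) == \prod_(v <- oneline0 phi) cf f (r v)]| /\
  #|[set a : {ffun 'I_n -> gT} | (\prod_(i < n) a i) == (\prod_(i < n) a (theta i))]| =
  #|[set f : {ffun 'I_n -> gT} | \prod_(0 <= v < n.+1) cf f v == \prod_(v <- oneline0 phi) cf f (r v)]|.
Proof.
move=> r0 hth.
have hR : forall f : {ffun 'I_n -> gT}, \prod_(i < n) f (theta i) = \prod_(v <- oneline0 phi) cf f (r v).
  move=> f; rewrite cf_big_o //; apply: eq_bigr => i _; by rewrite -hth cfE.
split.
- set rho := (phi^-1 * theta)%g.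
  have hr : forall j, (rho j).+1 = r j.+1 by move=> j; rewrite permM hth permKV.
  symmetry.
  apply: (@card_bij_pred _ _ (fun f => [ffun i => f (rho i)])).
    move=> f1 f2 E; apply/ffunP => i.
    have := congr1 (fun g : {ffun 'I_n -> gT} => g (rho^-1 i)%g) E; by rewrite /= !ffunE permKV.
  move=> f; congr (_ == _).
    rewrite big_shift r0 /= mul1g; apply: eq_bigr => i _; by rewrite ffunE -hr cfE.
  rewrite -hR; apply: eq_bigr => i _; by rewrite ffunE permM permK.
- apply: eq_card => f; rewrite !inE -hR cf_big //.
Qed.

End Reduce.

Theorem mainTheorem2 (gT : finGroupType) (n : nat) (phi theta : 'S_n) (x y : nat) :
  1 <= n -> cyclic_op phi theta x y -> word_prob gT phi = word_prob gT theta.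
Proof.
move=> n1 [hx hy h1 h2 hc].
suff E : #|[set a : {ffun 'I_n -> gT} | (\prod_(i < n) a i)%g == (\prod_(i < n) a (phi i))%g]| =
  #|[set a : {ffun 'I_n -> gT} | (\prod_(i < n) a i)%g == (\prod_(i < n) a (theta i))%g]| by rewrite /word_prob E.
have st := struct n1 hx hy h1 h2.
have uo := uniq_o phi.
have o0 := nth_o0 phi.
case: hc => [[xn [xy hr]] | [yx hr]].
- have r0 : relab_i x y 0 = 0 by rewrite ri_lo.
  have [-> ->] := reduce gT r0 (theta_rel r0 hr).
  case: st => [[_ [C [D eo]]] | [xn' _] | [y0 _]]; try lia.
  rewrite eo; rewrite eo in uo o0.
  case: (posnP x) => [x0|x0].
    rewrite x0 in uo o0 *.
    have C0 : C = [::] by exact: (@head0 (C ++ [:: 0; y; 0.+1] ++ D) C (y :: 0.+1 :: D) erefl uo o0).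
    subst C; apply: caseI0 => //; lia.
  apply: caseI1 => //; lia.
- have r0 : relab_ii x y 0 = 0 by rewrite rii_lo.
  have [-> ->] := reduce gT r0 (theta_rel r0 hr).
  case: st => [[xn [C [D eo]]] | [xn [y0 [C eo]]] | [y0 [xn [D eo]]]].
  + rewrite eo; rewrite eo in uo o0.
    case: (posnP y) => [y0|y0].
      rewrite y0 in uo o0.
      have := head0 (s := C ++ [:: x; 0; x.+1] ++ D) (C := C ++ [:: x]) (E := x.+1 :: D).
      by rewrite -catA => /(_ erefl uo o0) /(congr1 size); rewrite size_cat addn1.
    apply: caseII1 => //; lia.
  + rewrite eo xn; rewrite eo in uo; apply: caseIIn => //; lia.
  + rewrite eo y0; rewrite eo in uo; apply: caseII0 => //; lia.
Qed.
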